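(* Let $\mu$ be a valuation on $\mathrm{Spec}(R)$ and $f\in R$, $f\ge0$. For every natural number $N\ge1$ and all rationals $r<s$ there exist rationals $r',s'$ with $r<r'<s'<s$ such that $\Delta[r',s']<\frac1N$.
   Context: $R$ is a Riesz space over $\mathbb{Q}$ with strong unit $1$; rationals identified with multiples of $1$. $\mathrm{Spec}(R)$ is the distributive lattice generated by $D(a)$, $a\in R$, subject to $D(1)=1$; $D(a)\wedge D(-a)=0$; $D(a+b)\le D(a)\vee D(b)$; $D(a)=0$ if $a\le0$; $D(a\vee b)=D(a)\vee D(b)$. A valuation is a map $\mu$ from $\mathrm{Spec}(R)$ to nonnegative lower reals (inhabited, downward closed, rounded sets of rationals) with $\mu(0)=0$, $\mu(1)=1$, $\mu(x)+\mu(y)=\mu(x\vee y)+\mu(x\wedge y)$, monotone, and $\mu(D(a))\le\bigvee_{\varepsilon>0}\mu(D(a-\varepsilon))$. $\Delta(r,s):=\mu(D(f-r)\wedge D(s-f))$, and $\Delta[r,s]$ is the upper real $1-\mu(D(r-f))-\mu(D(f-s))$; ''$\Delta[r',s']<q$'' means $q$ belongs to this upper real, i.e. there are rationals $a<\mu(D(r'-f))$, $b<\mu(D(f-s'))$ with $1-a-b<q$. *)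

(* Defs.v *)
From HB Require Import structures.
From mathcomp Require Import all_boot all_order all_algebra.
Set Implicit Arguments. Unset Strict Implicit. Unset Printing Implicit Defensive.
Import Order.TTheory GRing.Theory Num.Theory.
Local Open Scope ring_scope.

Record riesz_space (V : lmodType rat) := RieszSpace {
  rle : V -> V -> Prop;
  rjoin : V -> V -> V;
  rmeet : V -> V -> V;
  runit : V;
  rle_refl : forall a, rle a a;
  rle_trans : forall a b c, rle a b -> rle b c -> rle a c;
  rle_anti : forall a b, rle a b -> rle b a -> a = b;
  rjoin_ubl : forall a b, rle a (rjoin a b);
  rjoin_ubr : forall a b, rle b (rjoin a b);
  rjoin_lub : forall a b c, rle a c -> rle b c -> rle (rjoin a b) c;
  rmeet_lbl : forall a b, rle (rmeet a b) a;
  rmeet_lbr : forall a b, rle (rmeet a b) b;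
  rmeet_glb : forall a b c, rle c a -> rle c b -> rle c (rmeet a b);
  rle_add : forall a b c, rle a b -> rle (a + c) (b + c);
  rle_scale : forall (q : rat) a b, 0 <= q -> rle a b -> rle (q *: a) (q *: b);
  runit_pos : rle 0 runit;
  runit_strong : forall a, exists n : nat, rle (rjoin a (- a)) (n%:R *: runit)
}.

(** Rationals identified with multiples of the unit. *)
Definition rq (V : lmodType rat) (R : riesz_space V) (q : rat) : V := q *: runit R.

(** * Spec(R): the distributive lattice generated by the D(a), presented as
    lattice terms modulo the least lattice preorder containing the distributive
    lattice laws and the defining relations. *)
Inductive spec_term (V : Type) : Type :=
  | SD : V -> spec_term V
  | Sbot : spec_term V
  | Stop : spec_term V
  | Sjoin : spec_term V -> spec_term V -> spec_term V
  | Smeet : spec_term V -> spec_term V -> spec_term V.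
Arguments Sbot {V}. Arguments Stop {V}.

Inductive spec_le (V : lmodType rat) (R : riesz_space V) :
    spec_term V -> spec_term V -> Prop :=
  | sle_refl x : spec_le R x x
  | sle_trans x y z : spec_le R x y -> spec_le R y z -> spec_le R x z
  | sle_bot x : spec_le R Sbot x
  | sle_top x : spec_le R x Stop
  | sle_joinl x y : spec_le R x (Sjoin x y)
  | sle_joinr x y : spec_le R y (Sjoin x y)
  | sle_join x y z : spec_le R x z -> spec_le R y z -> spec_le R (Sjoin x y) z
  | sle_meetl x y : spec_le R (Smeet x y) x
  | sle_meetr x y : spec_le R (Smeet x y) y
  | sle_meet x y z : spec_le R z x -> spec_le R z y -> spec_le R z (Smeet x y)
  | sle_distr x y z :
      spec_le R (Smeet x (Sjoin y z)) (Sjoin (Smeet x y) (Smeet x z))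
  | sle_D1 : spec_le R Stop (SD (runit R))
  | sle_Dopp a : spec_le R (Smeet (SD a) (SD (- a))) Sbot
  | sle_Dadd a b : spec_le R (SD (a + b)) (Sjoin (SD a) (SD b))
  | sle_Dnonpos a : rle R a 0 -> spec_le R (SD a) Sbot
  | sle_Djoin1 a b : spec_le R (SD (rjoin R a b)) (Sjoin (SD a) (SD b))
  | sle_Djoin2 a b : spec_le R (Sjoin (SD a) (SD b)) (SD (rjoin R a b)).

Definition lower_real (x : rat -> Prop) : Prop :=
  (exists q, x q) /\
  (forall p q, p <= q -> x q -> x p) /\
  (forall q, x q -> exists p, q < p /\ x p).

Definition lr_nonneg (x : rat -> Prop) : Prop := forall q : rat, q < 0 -> x q.

Definition lr_const (c : rat) : rat -> Prop := fun q => q < c.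

Definition lr_add (x y : rat -> Prop) : rat -> Prop :=
  fun q => exists a b, x a /\ y b /\ q < a + b.

Definition lr_eq (x y : rat -> Prop) : Prop := forall q, x q <-> y q.
Definition lr_le (x y : rat -> Prop) : Prop := forall q, x q -> y q.

Record valuation (V : lmodType rat) (R : riesz_space V)
    (mu : spec_term V -> rat -> Prop) : Prop := Valuation {
  val_lower : forall x, lower_real (mu x);
  val_nonneg : forall x, lr_nonneg (mu x);
  val_mono : forall x y, spec_le R x y -> lr_le (mu x) (mu y);
  val_bot : lr_eq (mu Sbot) (lr_const 0);
  val_top : lr_eq (mu Stop) (lr_const 1);
  val_modular : forall x y,
      lr_eq (lr_add (mu x) (mu y)) (lr_add (mu (Sjoin x y)) (mu (Smeet x y)));
  val_cont : forall a q, mu (SD a) q ->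
      exists eps : rat, 0 < eps /\ mu (SD (a - rq R eps)) q
}.

(** "Delta[r,s] < q" : q belongs to the upper real 1 - mu(D(r-f)) - mu(D(f-s)). *)
Definition Delta_lt (V : lmodType rat) (R : riesz_space V)
    (mu : spec_term V -> rat -> Prop) (f : V) (r s q : rat) : Prop :=
  exists a b : rat, mu (SD (rq R r - f)) a /\ mu (SD (f - rq R s)) b /\
                    1 - a - b < q.

(* Main.v *)
Require Import Defs.
From HB Require Import structures.
From mathcomp Require Import all_boot all_order all_algebra.
From Stdlib Require Import Classical.
Import Order.TTheory GRing.Theory Num.Theory.
Local Open Scope ring_scope.
Lemma core (A B : nat -> rat -> Prop) (N : nat) : (1 <= N)%N ->
 (forall k q, q < 0 -> A k q) -> (forall k q, q < 0 -> B k q) ->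
 (forall i, (i < N)%N -> forall q, q < 1 -> exists b a, B i b /\ A i.+1 a /\ q < a + b) ->
 exists i, (i <= N)%N /\ exists a b, A i a /\ B i b /\ 1 - a - b < 1 / N%:R.
Proof.
move=> hN hA hB hG; apply: NNPP => H.
have Hn : forall i, (i <= N)%N -> forall a b, A i a -> B i b -> 1 / N%:R <= 1 - a - b.
  move=> i hi a b ha hb; rewrite leNgt; apply/negP => hlt; apply: H.
  by exists i; split => //; exists a, b.
have N0 : (N%:R : rat) != 0 by rewrite pnatr_eq0 -lt0n.
set e : rat := (N%:R * (N.+3)%:R)^-1.
have e0 : 0 < e by rewrite invr_gt0 mulr_gt0 // ltr0n.
set x := 1 / N%:R - e.
have Ind : forall k, (k <= N)%N -> exists a, A k a /\ k%:R * x - e <= a.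
  elim=> [|k IH] hk.
  - exists (-e); split; first by apply: hA; rewrite oppr_lt0.
    by rewrite mul0r sub0r.
  - have [a [ha hle]] := IH (ltnW hk).
    have he1 : 1 - e < 1 by rewrite gtrBl.
    have [b [a' [hb [ha' hq]]]] := hG k hk (1 - e) he1.
    exists a'; split => //.
    have h2 := Hn k (ltnW hk) a b ha hb.
    have h4 : 1 - e - b < a' by rewrite ltrBlDr.
    have h5 : a + x <= 1 - e - b.
      rewrite /x addrA [1 - e - b]addrAC lerD2r addrC -lerBrDr addrAC //.
    rewrite -natr1 mulrDl mul1r addrAC.
    apply: (le_trans _ (ltW (le_lt_trans h5 h4))).
    by rewrite lerD2r.
have [a [ha hle]] := Ind N (leqnn N).
have ne0 : -e < 0 by rewrite oppr_lt0.
have := Hn N (leqnn N) a (-e) ha (hB _ _ ne0).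
apply/negP; rewrite -ltNge.
have hNx : N%:R * x = 1 - N%:R * e by rewrite /x mulrBr mul1r mulfV.
rewrite hNx in hle.
rewrite opprK addrAC.
apply: (le_lt_trans (lerB (lexx (1 + e)) hle)).
have -> : 1 + e - (1 - N%:R * e - e) = (N.+2)%:R * e.
  by apply/eqP; rewrite subr_eq -!natr1 !mulrDl !mul1r [X in _ == X]addrC !addrA [1 - _ - e + _]addrAC !subrK.
have h3 : (N.+3)%:R * e <= 1 / N%:R.
  by rewrite /e invfM mulrCA mulfV ?mulr1 ?mul1r // pnatr_eq0.
apply: lt_le_trans h3.
by rewrite ltr_pM2r // ltr_nat.
Qed.

Section Geo.
Variables (V : lmodType rat) (R : riesz_space V).

Lemma SDnonpos (c : rat) : c <= 0 -> spec_le R (SD (rq R c)) Sbot.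
Proof.
move=> hc; apply: sle_Dnonpos.
have h1 : 0 <= - c by rewrite oppr_ge0.
have := rle_add (c *: runit R) (rle_scale h1 (runit_pos R)).
by rewrite scaler0 add0r -scalerDl addNr scale0r.
Qed.

Lemma SDmul (e : V) n : spec_le R (SD (e *+ n.+1)) (SD e).
Proof.
elim: n => [|n IH]; first exact: sle_refl.
rewrite mulrS; apply: sle_trans (sle_Dadd R _ _) _.
exact: sle_join (sle_refl _ _) IH.
Qed.

Lemma Dtop (f : V) (u v : rat) : u < v ->
  spec_le R Stop (Sjoin (SD (f - rq R u)) (SD (rq R v - f))).
Proof.
move=> huv; set d := v - u.
have d0 : 0 < d by rewrite subr_gt0.
set m := Num.Def.archi_bound d^-1.
have hm : d^-1 < m.+1%:R.
  apply: lt_trans (archi_boundP _) _; first by rewrite invr_ge0 ltW.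
  by rewrite ltr_nat.
have hmd : 1 < m.+1%:R * d.
  by rewrite -[X in X < _](mulVf (lt0r_neq0 d0)) ltr_pM2r.
apply: sle_trans (sle_D1 R) _.
have -> : runit R = (1 - m.+1%:R * d) *: runit R + (m.+1%:R * d) *: runit R.
  by rewrite -scalerDl subrK scale1r.
apply: sle_trans (sle_Dadd R _ _) _.
apply: sle_join.
  apply: sle_trans _ (sle_bot _ _).
  by apply: SDnonpos; rewrite subr_le0 ltW.
rewrite -scalerA scaler_nat.
apply: sle_trans (SDmul _ _) _.
have -> : d *: runit R = (f - rq R u) + (rq R v - f).
  by rewrite /d /rq scalerBl addrCA addrAC subrr add0r.
exact: sle_Dadd.
Qed.

End Geo.

Lemma gap (V : lmodType rat) (R : riesz_space V)
    (mu : spec_term V -> rat -> Prop) (Hmu : valuation R mu) (f : V) (u v : rat) :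
  u < v -> forall q, q < 1 ->
  exists b a, mu (SD (f - rq R u)) b /\ mu (SD (rq R v - f)) a /\ q < a + b.
Proof.
move=> huv q hq.
set x := SD (f - rq R u); set y := SD (rq R v - f).
have hj : forall p, p < 1 -> mu (Sjoin x y) p.
  move=> p hp; apply: (val_mono Hmu (@Dtop _ R f _ _ huv)).
  by apply/(val_top Hmu).
have [_ [_ rnd]] := val_lower Hmu (Sjoin x y).
have [p [hqp hp]] := rnd q (hj q hq).
have [p2 [hpp2 hp2]] := rnd p hp.
have hadd : lr_add (mu x) (mu y) q.
  apply/(val_modular Hmu); exists p2, (q - p); split => //; split.
    by apply: (val_nonneg Hmu); rewrite subr_lt0.
  by rewrite addrCA ltrDl subr_gt0.
have [a [b [ha [hb hab]]]] := hadd.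
by exists a, b; split => //; split => //; rewrite addrC.
Qed.

Theorem theorem4p12 (V : lmodType rat) (R : riesz_space V)
    (mu : spec_term V -> rat -> Prop) (Hmu : valuation R mu)
    (f : V) (hf : rle R 0 f) (N : nat) (hN : (1 <= N)%N) (r s : rat) (hrs : r < s) :
  exists r' s' : rat, r < r' /\ r' < s' /\ s' < s /\
    Delta_lt R mu f r' s' (1 / N%:R).
Proof.
set d := (s - r) / (N.*2.+3)%:R.
have d0 : 0 < d by rewrite divr_gt0 ?subr_gt0 ?ltr0n.
pose t k := r + (k.+1)%:R * d.
have tmono : forall j k, (j < k)%N -> t j < t k.
  by move=> j k hjk; rewrite /t ltrD2l ltr_pM2r // ltr_nat.
have rt : forall k, r < t k by move=> k; rewrite /t ltrDl mulr_gt0 ?ltr0n.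
have ts : s = t (N.*2.+2).
  by rewrite /t /d mulrC divfK ?pnatr_eq0 // addrC subrK.
have [i [hi [a [b [ha [hb hab]]]]]] := @core
  (fun i => mu (SD (rq R (t (i.*2)) - f)))
  (fun i => mu (SD (f - rq R (t (i.*2).+1)))) N hN
  (fun k q hq => val_nonneg Hmu _ hq) (fun k q hq => val_nonneg Hmu _ hq)
  (fun i hi q hq => @gap _ _ _ Hmu f _ _ (tmono _ _ (ltnSn _)) q hq).
exists (t i.*2), (t i.*2.+1); split; first exact: rt.
split; first exact: tmono.
split; first by rewrite ts; apply: tmono; rewrite !ltnS leq_double.
by exists a, b.
Qed.
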